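(* For every $(a,b)\in\mathbb{Z}^2$, $\mu_1E_{(a,b)}-E_{\psi(a,b)}\in q^{-\frac12}\mathcal{A}_+$, where $\psi(a,b)=(-a-[-b]_+,\,b)$.
   Context: Let $\mathcal{T}$ be the quantum torus over $\mathbb{Z}[q^{\pm\frac12}]$ generated by $X_1^{\pm1},X_2^{\pm1}$ with $X_1X_2=qX_2X_1$, with skew field of fractions $\mathcal{F}$. Define $X_k\in\mathcal{F}$ ($k\in\mathbb{Z}$) by $X_{k-1}X_{k+1}=q^{\frac12}X_k+1$ for $k$ odd and $X_{k-1}X_{k+1}=q^2X_k^4+1$ for $k$ even; $\mathcal{A}_q(1,4)$ is the $\mathbb{Z}[q^{\pm\frac12}]$-subalgebra of $\mathcal{F}$ generated by all $X_k$. For $x\in\mathbb{Z}$, $[x]_+=\max(x,0)$. Standard monomials: $E_{(a,b)}=q^{-\frac12ab}X_3^{[-a]_+}X_1^{[a]_+}X_2^{[b]_+}X_0^{[-b]_+}$; $\mathcal{A}_+=\bigoplus_{(a,b)\in\mathbb{Z}^2}\mathbb{Z}[q^{-\frac12}]E_{(a,b)}$. Also $\mu_1E_{(a,b)}=q^{-\frac12ab}X_4^{[-b]_+}X_2^{[b]_+}X_3^{[a]_+}X_1^{[-a]_+}$. *)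

(* Defs.v *)
From mathcomp Require Import all_boot all_algebra.
Set Implicit Arguments. Unset Strict Implicit. Unset Printing Implicit Defensive.
Import GRing.Theory.
Local Open Scope ring_scope.

Definition pospart (x : int) : nat :=
  match x with Posz n => n | Negz _ => 0%N end.

(* t plays the role of q^{1/2}; so q = t^2, q^2 = t^4.
   Right-hand side of the exchange relation X_{k-1} X_{k+1} = exch t k X_k:
   q^{1/2} X_k + 1 for k odd, q^2 X_k^4 + 1 for k even. *)
Definition exch (D : unitRingType) (t : D) (k : int) (x : D) : D :=
  if odd (absz k) then t * x + 1 else t ^+ 4 * x ^+ 4 + 1.

(* The subring of D generated by t^{±1}, x1^{±1}, x2^{±1} is a copy of the
   quantum torus T over Z[q^{±1/2}]: the monomials t^k x1^a x2^b are
   Z-linearly independent. *)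
Definition torus_faithful (D : unitRingType) (t x1 x2 : D) : Prop :=
  forall (s : seq (int * int * int)) (n : int * int * int -> int),
    uniq s ->
    \sum_(m <- s) ((n m)%:~R * t ^ m.1.1 * x1 ^ m.1.2 * x2 ^ m.2) = 0 ->
    forall m, m \in s -> n m = 0.

Definition Emon (D : unitRingType) (t : D) (X : int -> D) (v : int * int) : D :=
  let: (a, b) := v in
  t ^ (- (a * b)) * X 3 ^+ pospart (- a) * X 1 ^+ pospart a
    * X 2 ^+ pospart b * X 0 ^+ pospart (- b).

Definition mu1E (D : unitRingType) (t : D) (X : int -> D) (v : int * int) : D :=
  let: (a, b) := v in
  t ^ (- (a * b)) * X 4 ^+ pospart (- b) * X 2 ^+ pospart b
    * X 3 ^+ pospart a * X 1 ^+ pospart (- a).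

Definition psi (v : int * int) : int * int :=
  (- v.1 - (pospart (- v.2))%:Z, v.2).

(* Main.v *)
Require Import Defs.
From mathcomp Require Import all_boot all_order all_algebra.
From mathcomp Require Import zify ring lra.
Import Order.Theory GRing.Theory Num.Theory.
Local Open Scope ring_scope.

Definition Lm {D : unitRingType} (t : D) (X : int -> D) (P : pred (int*int)) (K : int) (x : D) : Prop :=
  exists s : seq ((int*int)*int*int), all (fun w => P w.1.1 && (w.1.2 <= K)) s /\
    x = \sum_(w <- s) (t ^ w.1.2 * Emon t X w.1.1) *~ w.2.



Lemma Lm0 {D : unitRingType} (t : D) X P K : Lm t X P K 0.
Proof. by exists [::]; rewrite big_nil. Qed.

Lemma LmD {D : unitRingType} (t : D) X P K x y : Lm t X P K x -> Lm t X P K y -> Lm t X P K (x + y).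
Proof.
move=> [s1 [h1 ->]] [s2 [h2 ->]]; exists (s1 ++ s2); split; first by rewrite all_cat h1 h2.
by rewrite big_cat.
Qed.

Lemma LmZ {D : unitRingType} (t : D) X P K x n : Lm t X P K x -> Lm t X P K (x *~ n).
Proof.
move=> [s [h ->]]; exists [seq (w.1, w.2 * n) | w <- s]; split.
  by rewrite all_map; apply: sub_all h => w.
rewrite big_map mulrz_suml; apply: eq_bigr => w _; by rewrite mulrzA.
Qed.

Lemma LmN {D : unitRingType} (t : D) X P K x : Lm t X P K x -> Lm t X P K (- x).
Proof. by move=> h; rewrite -mulrN1z; apply: LmZ. Qed.

Lemma LmB {D : unitRingType} (t : D) X P K x y : Lm t X P K x -> Lm t X P K y -> Lm t X P K (x - y).
Proof. by move=> hx hy; apply: LmD => //; apply: LmN. Qed.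

Lemma LmW {D : unitRingType} (t : D) X (P Q : pred (int*int)) K K' x :
  (forall w, P w -> Q w) -> K <= K' -> Lm t X P K x -> Lm t X Q K' x.
Proof.
move=> PQ KK [s [h ->]]; exists s; split => //; apply: sub_all h => w /andP[/PQ -> e] /=.
exact: le_trans e KK.
Qed.

Lemma Lm1 {D : unitRingType} (t : D) X (P : pred (int*int)) K v e :
  P v -> e <= K -> Lm t X P K (t ^ e * Emon t X v).
Proof.
move=> Pv eK; exists [:: (v, e, 1)]; split; first by rewrite /= Pv eK.
by rewrite big_seq1.
Qed.

Lemma Lm_bind {D : unitRingType} (t : D) X (P Q : pred (int*int)) K K' x y :
  Lm t X P K x -> (forall v e, P v -> e <= K -> Lm t X Q K' (t ^ e * Emon t X v * y)) ->
  Lm t X Q K' (x * y).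
Proof.
move=> [s [h ->]] hb; elim: s h => [|w s IH] /=; first by move=> _; rewrite big_nil mul0r; apply: Lm0.
move=> /andP[/andP[Pw ew] hs]; rewrite big_cons mulrDl; apply: LmD; last exact: IH.
by rewrite mulrzAl; apply: LmZ; apply: hb.
Qed.


Record hyp {D : unitRingType} (t : D) (X : int -> D) : Prop := Hyp {
  tU : t \is a GRing.unit;
  tC : forall x, t * x = x * t;
  X1U : X 1 \is a GRing.unit;
  X2U : X 2 \is a GRing.unit;
  c12 : X 1 * X 2 = t ^+ 2 * (X 2 * X 1);
  e1 : X 0 * X 2 = t * X 1 + 1;
  e2 : X 1 * X 3 = t ^+ 4 * X 2 ^+ 4 + 1;
  e3 : X 2 * X 4 = t * X 3 + 1 }.
Arguments tU {D t X}.
Arguments tC {D t X}.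
Arguments X1U {D t X}.
Arguments X2U {D t X}.
Arguments c12 {D t X}.
Arguments e1 {D t X}.
Arguments e2 {D t X}.
Arguments e3 {D t X}.

Lemma tzC {D : unitRingType} {t : D} {X} (H : hyp t X) z x : t ^ z * x = x * t ^ z.
Proof.
have cx : GRing.comm x t by rewrite /GRing.comm (tC H).
case: z => n; first exact/esym/commrX.
exact/esym/commrV/commrX.
Qed.

Lemma tzD {D : unitRingType} {t : D} {X} (H : hyp t X) z w : t ^ (z + w) = t ^ z * t ^ w.
Proof. exact: exprzDr (tU H) z w. Qed.

Lemma tzM {D : unitRingType} {t : D} {X} (H : hyp t X) z w x : t ^ z * (t ^ w * x) = t ^ (z + w) * x.
Proof. by rewrite mulrA (tzD H). Qed.

Lemma tzA {D : unitRingType} {t : D} {X} (H : hyp t X) x z y : x * (t ^ z * y) = t ^ z * (x * y).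
Proof. by rewrite mulrA -(tzC H) mulrA. Qed.

Lemma tzE {D : unitRingType} {t : D} {X} (H : hyp t X) z w : z = w -> t ^ z = t ^ w.
Proof. by move->. Qed.
Arguments tzE {D t X} H {z w}.

Lemma tz0 {D : unitRingType} (t : D) : t ^ 0 = 1.
Proof. by []. Qed.

Lemma tzK {D : unitRingType} {t : D} {X} (H : hyp t X) z x : t ^ z * (t ^ (- z) * x) = x.
Proof. by rewrite (tzM H) subrr mul1r. Qed.

Lemma tzI {D : unitRingType} {t : D} {X} (H : hyp t X) z x y : t ^ z * x = t ^ z * y -> x = y.
Proof.
have K v : t ^ (- z) * (t ^ z * v) = v by rewrite (tzM H) addNr mul1r.
by move=> e; rewrite -(K x) e K.
Qed.

Definition qc {D : unitRingType} (t : D) z x y := x * y = t ^ z * (y * x).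

Lemma qc_sym {D : unitRingType} {t : D} {X} (H : hyp t X) z x y : qc t z x y -> qc t (- z) y x.
Proof. by rewrite /qc => e; rewrite e (tzM H) addNr mul1r. Qed.

Lemma qc_powl {D : unitRingType} {t : D} {X} (H : hyp t X) z x y (n : nat) :
  qc t z x y -> qc t (z * n%:Z) (x ^+ n) y.
Proof.
rewrite /qc => e; elim: n => [|n IH]; first by rewrite !expr0 mulr0 expr0z !mul1r mulr1.
rewrite exprS -mulrA IH (tzA H) [x * (y * _)]mulrA e -mulrA (tzM H) -mulrA -exprS.
by congr (t ^ _ * _); lia.
Qed.

Lemma qc_powr {D : unitRingType} {t : D} {X} (H : hyp t X) z x y (n : nat) :
  qc t z x y -> qc t (z * n%:Z) x (y ^+ n).
Proof.
move=> e; have := qc_sym H _ _ _ (qc_powl H _ _ _ n (qc_sym H _ _ _ e)).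

by rewrite mulNr opprK.
Qed.

Lemma qc_pow {D : unitRingType} {t : D} {X} (H : hyp t X) z x y (m n : nat) :
  qc t z x y -> qc t (z * m%:Z * n%:Z) (x ^+ m) (y ^+ n).
Proof. by move=> e; exact: (qc_powr H _ _ _ n (qc_powl H _ _ _ m e)). Qed.


Lemma comm_poly {D : unitRingType} {t : D} {X} (H : hyp t X) (y : D) z (n : nat) :
  y * (t ^ z * y ^+ n + 1) = (t ^ z * y ^+ n + 1) * y.
Proof.
rewrite mulrDr mulrDl mulr1 mul1r (tzA H) -mulrA; congr (t ^ z * _ + _).
by rewrite -exprS exprSr.
Qed.

Lemma r21 {D : unitRingType} {t : D} {X} (H : hyp t X) : qc t (-2) (X 2) (X 1).
Proof. have c : qc t 2 (X 1) (X 2) := c12 H. exact: (qc_sym H _ _ _ c). Qed.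

Lemma r23 {D : unitRingType} {t : D} {X} (H : hyp t X) : qc t 2 (X 2) (X 3).
Proof.
rewrite /qc; apply: (mulrI (X1U H)).
rewrite mulrA (c12 H) -mulrA -[X 2 * X 1 * X 3]mulrA (e2 H) (tzA H) [X 1 * (X 3 * X 2)]mulrA (e2 H).
congr (_ * _); exact: (comm_poly H (X 2) 4 4).
Qed.

Lemma c12' {D : unitRingType} {t : D} {X} (H : hyp t X) : qc t 2 (X 1) (X 2).
Proof. exact: c12 H. Qed.
Lemma e1' {D : unitRingType} {t : D} {X} (H : hyp t X) : X 0 * X 2 = t ^ 1 * X 1 + 1.
Proof. exact: e1 H. Qed.
Lemma e2' {D : unitRingType} {t : D} {X} (H : hyp t X) : X 1 * X 3 = t ^ 4 * X 2 ^+ 4 + 1.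
Proof. exact: e2 H. Qed.
Lemma e3' {D : unitRingType} {t : D} {X} (H : hyp t X) : X 2 * X 4 = t ^ 1 * X 3 + 1.
Proof. exact: e3 H. Qed.

Lemma r32 {D : unitRingType} {t : D} {X} (H : hyp t X) : qc t (-2) (X 3) (X 2).
Proof. exact: (qc_sym H _ _ _ (r23 H)). Qed.

Lemma r01 {D : unitRingType} {t : D} {X} (H : hyp t X) : qc t 2 (X 0) (X 1).
Proof.
rewrite /qc; apply: (mulIr (X2U H)).
rewrite -mulrA (c12' H) (tzA H) [X 0 * (X 2 * X 1)]mulrA (e1' H).
rewrite -mulrA -[X 1 * X 0 * X 2]mulrA (e1' H).
congr (_ * _); exact/esym/(comm_poly H (X 1) 1 1).
Qed.

Lemma r10 {D : unitRingType} {t : D} {X} (H : hyp t X) : qc t (-2) (X 1) (X 0).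
Proof. exact: (qc_sym H _ _ _ (r01 H)). Qed.

Lemma s31 {D : unitRingType} {t : D} {X} (H : hyp t X) : X 3 * X 1 = t ^ (-4) * X 2 ^+ 4 + 1.
Proof.
apply: (mulrI (X1U H)); rewrite mulrA (e2' H) mulrDl mul1r mulrDr mulr1 (tzA H) -mulrA.
have q := qc_pow H (-2) (X 2) (X 1) 4 1 (r21 H); rewrite expr1 in q.
by rewrite q (tzM H); congr (t ^ _ * _ + _).
Qed.

Lemma s20 {D : unitRingType} {t : D} {X} (H : hyp t X) : X 2 * X 0 = t ^ (-1) * X 1 + 1.
Proof.
apply: (mulIr (X2U H)); rewrite -mulrA (e1' H) mulrDr mulr1 (tzA H) (r21 H) (tzM H).
by rewrite mulrDl mul1r -mulrA.
Qed.

Lemma r34 {D : unitRingType} {t : D} {X} (H : hyp t X) : qc t 2 (X 3) (X 4).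
Proof.
rewrite /qc; apply: (mulrI (X2U H)).
rewrite mulrA (r23 H) -mulrA -[X 3 * X 2 * X 4]mulrA (e3' H).
rewrite (tzA H) [X 2 * (X 4 * X 3)]mulrA (e3' H).
congr (_ * _); exact: (comm_poly H (X 3) 1 1).
Qed.

Lemma r43 {D : unitRingType} {t : D} {X} (H : hyp t X) : qc t (-2) (X 4) (X 3).
Proof. exact: (qc_sym H _ _ _ (r34 H)). Qed.

Lemma s42 {D : unitRingType} {t : D} {X} (H : hyp t X) : X 4 * X 2 = t ^ (-1) * X 3 + 1.
Proof.
apply: (mulrI (X2U H)); rewrite mulrA (e3' H) mulrDl mul1r -mulrA (r32 H) (tzM H).
by rewrite mulrDr mulr1 (tzA H).
Qed.

Lemma s4 {D : unitRingType} {t : D} {X} (H : hyp t X) :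
  X 4 = t ^ (-1) * (X 3 * X 0) - t ^ (-4) * X 2 ^+ 3.
Proof.
apply: (mulrI (X2U H)); rewrite (e3' H) mulrBr !(tzA H) [X 2 * (X 3 * X 0)]mulrA (r23 H) -mulrA.
rewrite -[X 3 * X 2 * X 0]mulrA (s20 H) mulrDr mulr1 (tzA H (X 3)) (s31 H).
rewrite !mulrDr !mulr1 !(tzM H) -exprS -(tzD H).
rewrite (tzE H (_ : -1 + 2 + -1 = 0)) // (tzE H (_ : -1 + 2 - 1 - 4 = -4)) //.
rewrite (tzE H (_ : -1 + 2 = 1)) // expr0z.
by rewrite addrAC (addrAC _ 1) subrr add0r addrC.
Qed.


Definition Lp {D : unitRingType} (X : int -> D) (a : int) := X 3 ^+ pospart (- a) * X 1 ^+ pospart a.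
Definition Rp {D : unitRingType} (X : int -> D) (b : int) := X 2 ^+ pospart b * X 0 ^+ pospart (- b).

Lemma EmonE {D : unitRingType} (t : D) X a b : Emon t X (a, b) = t ^ (- (a * b)) * (Lp X a * Rp X b).
Proof. by rewrite /Emon /Lp /Rp !mulrA. Qed.

Lemma pp_nat (n : nat) : pospart n%:Z = n. Proof. by []. Qed.
Lemma ppN_nat (n : nat) : pospart (- n%:Z) = 0%N. Proof. by case: n. Qed.

Lemma LmT {D : unitRingType} {t : D} {X} (H : hyp t X) P K x z :
  Lm t X P K x -> Lm t X P (z + K) (t ^ z * x).
Proof.
move=> [s [h ->]]; exists [seq (w.1.1, z + w.1.2, w.2) | w <- s]; split.
  rewrite all_map; apply: sub_all h => w /andP[Pw e] /=; by rewrite Pw lerD2l.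
rewrite big_map mulr_sumr; apply: eq_bigr => w _ /=.
by rewrite mulrzAr mulrA (tzD H).
Qed.

Lemma LpX1 {D : unitRingType} {t : D} {X} (H : hyp t X) a :
  Lp X a * X 1 = if a < 0 then Lp X (a + 1) * (t ^ (-4) * X 2 ^+ 4 + 1) else Lp X (a + 1).
Proof.
case: a => n.
  have -> : Posz n + 1 = (n.+1)%:Z by lia.
  by rewrite /Lp !ppN_nat !pp_nat -mulrA -exprSr.
rewrite NegzE ltrNl.
have -> : - (n.+1)%:Z + 1 = - n%:Z by lia.
rewrite /Lp !opprK !ppN_nat !pp_nat !expr0 !mulr1 oppr0 /=.
by rewrite exprSr -mulrA (s31 H).
Qed.

Lemma stepH {D : unitRingType} {t : D} {X} (H : hyp t X) a (k u : nat) :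
  Lp X a * X 2 ^+ k.+1 * X 0 ^+ u.+1 =
  Lp X a * X 2 ^+ k * X 0 ^+ u + t ^ (-1 - 2 * k%:Z) * (Lp X a * X 1 * X 2 ^+ k * X 0 ^+ u).
Proof.
have q := qc_pow H (-2) (X 2) (X 1) k 1 (r21 H); rewrite expr1 in q.
rewrite exprSr exprS !mulrA -[Lp X a * X 2 ^+ k * X 2 * X 0]mulrA (s20 H) mulrDr mulr1 mulrDl addrC.
congr (_ + _).
rewrite (tzA H) -mulrA -[Lp X a * X 2 ^+ k * X 1]mulrA q (tzA H) -mulrA (tzM H) !mulrA.
have e : -1 + -2 * k%:Z * 1%Z = -1 - 2 * k%:Z by lia.
by rewrite e.
Qed.

Definition RH (a b : int) : pred (int * int) := fun w => (a < w.1) && (b <= w.2).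
Definition RF (a b : int) : pred (int * int) := fun w => (a <= w.1) && (b <= w.2).

Lemma diff_full {D : unitRingType} {t : D} {X} (P Q : pred (int*int)) K K' x v e :
  Lm t X P K (x - t ^ e * Emon t X v) -> (forall w, P w -> Q w) -> Q v -> K <= K' -> e <= K' ->
  Lm t X Q K' x.
Proof.
move=> h PQ Qv KK eK; rewrite -(subrK (t ^ e * Emon t X v) x); apply: LmD.
  exact: LmW h.
exact: Lm1.
Qed.

Lemma expand4 {D : unitRingType} {t : D} {X} (H : hyp t X) a (k u : nat) :
  Lp X a * (t ^ (-4) * X 2 ^+ 4 + 1) * X 2 ^+ k * X 0 ^+ u =
  t ^ (-4) * (Lp X a * X 2 ^+ (k + 4) * X 0 ^+ u) + Lp X a * X 2 ^+ k * X 0 ^+ u.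
Proof.
rewrite mulrDr mulr1 !mulrDl (tzA H) -!mulrA; congr (t ^ _ * _ + _).
by rewrite addnC exprD -!mulrA.
Qed.

Lemma lemH {D : unitRingType} {t : D} {X} (H : hyp t X) (u : nat) : forall (a : int) (k : nat),
  Lm t X (RH a (k%:Z - u%:Z)) (a * (k%:Z - u%:Z) - 1)
    (Lp X a * X 2 ^+ k * X 0 ^+ u - t ^ (a * (k%:Z - u%:Z)) * Emon t X (a, k%:Z - u%:Z)).
Proof.
elim: u => [|u IH] a.
  move=> k; rewrite subr0 EmonE (tzM H) addrN mul1r /Rp pp_nat ppN_nat mulrA subrr; exact: Lm0.
case=> [|k].
  rewrite sub0r EmonE (tzM H) addrN mul1r /Rp opprK pp_nat ppN_nat mulrA subrr; exact: Lm0.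
have e : (k.+1)%:Z - (u.+1)%:Z = k%:Z - u%:Z by lia.
rewrite e (stepH H) (LpX1 H) addrAC; apply: LmD; first exact: IH.
have F (j : nat) : Lm t X (RF (a + 1) (j%:Z - u%:Z)) ((a + 1) * (j%:Z - u%:Z)) (Lp X (a + 1) * X 2 ^+ j * X 0 ^+ u).
  apply: diff_full (IH (a + 1) j) _ _ _ _ => //.
  - by move=> w /andP[h1 h2]; rewrite /RF h2 andbT; lia.
  - by rewrite /RF /= !lexx.
  - lia.
case: ifP => ha.
  rewrite (expand4 H) [t ^ _ * (_ + _)]mulrDr (tzM H); apply: LmD.
    apply: LmW (LmT H _ _ _ _ (F (k + 4)%N)).
      by move=> w /andP[h1 h2]; rewrite /RH; apply/andP; split; lia.
    nia.
  apply: LmW (LmT H _ _ _ _ (F k)).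
    by move=> w /andP[h1 h2]; rewrite /RH; apply/andP; split; lia.
  nia.
apply: LmW (LmT H _ _ _ _ (F k)).
  by move=> w /andP[h1 h2]; rewrite /RH; apply/andP; split; lia.
nia.
Qed.

Lemma lemHF {D : unitRingType} {t : D} {X} (H : hyp t X) (a : int) (k u : nat) :
  Lm t X (RF a (k%:Z - u%:Z)) (a * (k%:Z - u%:Z)) (Lp X a * X 2 ^+ k * X 0 ^+ u).
Proof.
apply: diff_full (lemH H u a k) _ _ _ _ => //.
- by move=> w /andP[h1 h2]; rewrite /RF h2 andbT; lia.
- by rewrite /RF /= !lexx.
- lia.
Qed.

Lemma pp_sub (b : int) : (pospart b)%:Z - (pospart (- b))%:Z = b.
Proof. by case: b => n; [rewrite ppN_nat subr0 | rewrite NegzE opprK ppN_nat pp_nat sub0r]. Qed.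

Lemma LpRp {D : unitRingType} {t : D} {X} (H : hyp t X) a b :
  Lp X a * X 2 ^+ pospart b * X 0 ^+ pospart (- b) = t ^ (a * b) * Emon t X (a, b).
Proof. by rewrite EmonE (tzM H) addrN mul1r /Rp mulrA. Qed.

Lemma LX0 {D : unitRingType} {t : D} {X} (H : hyp t X) a b :
  Lm t X (RH a (b - 1)) (- a - 1) (Emon t X (a, b) * X 0 - t ^ (- a) * Emon t X (a, b - 1)).
Proof.
have kub : (pospart b)%:Z - ((pospart (- b)).+1)%:Z = b - 1.
  by rewrite -addn1 PoszD opprD addrA pp_sub.
have := LmT H _ _ _ (- (a * b)) (lemH H (pospart (- b)).+1 a (pospart b)).
rewrite kub => h.
have -> : Emon t X (a, b) * X 0 - t ^ (- a) * Emon t X (a, b - 1) =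
  t ^ (- (a * b)) * (Lp X a * X 2 ^+ pospart b * X 0 ^+ (pospart (- b)).+1 -
     t ^ (a * (b - 1)) * Emon t X (a, b - 1)).
  rewrite mulrBr (tzM H) (tzE H (_ : - (a * b) + a * (b - 1) = - a)); last lia.
  by rewrite EmonE /Rp exprSr !mulrA.
apply: LmW h => //; lia.
Qed.

Lemma LX0e {D : unitRingType} {t : D} {X} (H : hyp t X) a b :
  b <= 0 -> Emon t X (a, b) * X 0 = t ^ (- a) * Emon t X (a, b - 1).
Proof.
move=> hb; have [n ->] : exists n : nat, b = - n%:Z by exists `|b|%N; lia.
have -> : - n%:Z - 1 = - (n.+1)%:Z by lia.
rewrite !EmonE /Rp !opprK !ppN_nat !pp_nat !expr0 !mul1r exprSr (tzM H) !mulrA.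
have e : - (a * - n%:Z) = - a - a * - (n.+1)%:Z by nia.
by rewrite e.
Qed.

Lemma LX1 {D : unitRingType} {t : D} {X} (H : hyp t X) a b :
  Lm t X (RF (a + 1) (b + 4)) (- b - 1) (Emon t X (a, b) * X 1 - t ^ (- b) * Emon t X (a + 1, b)).
Proof.
have q2 := qc_pow H (-2) (X 2) (X 1) (pospart b) 1 (r21 H).
have q0 := qc_pow H 2 (X 0) (X 1) (pospart (- b)) 1 (r01 H).
rewrite expr1 in q2 q0.
have E1 : Emon t X (a, b) * X 1 =
    t ^ (- (a * b) - 2 * b) * (Lp X a * X 1 * X 2 ^+ pospart b * X 0 ^+ pospart (- b)).
  rewrite EmonE /Rp -mulrA -[Lp X a * _ * X 1]mulrA -[_ * X 0 ^+ _ * X 1]mulrA q0 (tzA H).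
  rewrite [X 2 ^+ _ * (X 1 * _)]mulrA q2 -[_ * (X 1 * _) * X 0 ^+ _]mulrA (tzM H) (tzA H) (tzM H).
  congr (t ^ _ * _); last by rewrite !mulrA.
  move: (pp_sub b); lia.
rewrite E1 (LpX1 H); case: ifP => ha.
  rewrite (expand4 H) [t ^ _ * (_ + _)]mulrDr (LpRp H) !(tzM H).
  rewrite (tzE H (_ : - (a * b) - 2 * b + (a + 1) * b = - b)); last nia.
  rewrite addrK.
  have := LmT H _ _ _ (- (a * b) - 2 * b + -4) (lemHF H (a + 1) (pospart b + 4) (pospart (- b))).
  move: (pp_sub b) => hb.
  apply: LmW.
    by move=> w; rewrite /RF => /andP[h1 h2]; apply/andP; split; lia.
  nia.
rewrite (LpRp H) (tzM H) (tzE H (_ : - (a * b) - 2 * b + (a + 1) * b = - b)); last nia.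
rewrite subrr; exact: Lm0.
Qed.


Lemma LX0F {D : unitRingType} {t : D} {X} (H : hyp t X) a b :
  Lm t X (RF a (b - 1)) (- a) (Emon t X (a, b) * X 0).
Proof.
apply: diff_full (LX0 H a b) _ _ _ _ => //.
- by move=> w /andP[h1 h2]; rewrite /RF h2 andbT; lia.
- by rewrite /RF /= !lexx.
- lia.
Qed.

Lemma LX1F {D : unitRingType} {t : D} {X} (H : hyp t X) a b :
  Lm t X (RF (a + 1) b) (- b) (Emon t X (a, b) * X 1).
Proof.
apply: diff_full (LX1 H a b) _ _ _ _ => //.
- by move=> w /andP[h1 h2]; rewrite /RF h1 /=; lia.
- by rewrite /RF /= !lexx.
- lia.
Qed.

Lemma ppC (x : int) : ((pospart x)%:Z = x /\ 0 <= x) \/ (pospart x = 0%N /\ x < 0).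
Proof. by case: x => n; [left | right]. Qed.

Definition Rg (a n : int) : pred (int * int) := fun w => (- a - n <= w.1) && (- n < w.2).

Lemma stepM {D : unitRingType} {t : D} {X} (H : hyp t X) (a n k : nat) :
  X 3 ^+ a * X 4 ^+ n.+1 * X 2 ^+ k.+1 =
  X 3 ^+ a * X 4 ^+ n * X 2 ^+ k + t ^ (-1 - 2 * n%:Z) * (X 3 ^+ a.+1 * X 4 ^+ n * X 2 ^+ k).
Proof.
have q := qc_pow H (-2) (X 4) (X 3) n 1 (r43 H); rewrite expr1 in q.
rewrite exprSr exprS !mulrA -[X 3 ^+ a * X 4 ^+ n * X 4 * X 2]mulrA (s42 H) mulrDr mulr1 mulrDl addrC.
congr (_ + _).
rewrite (tzA H) -[X 3 ^+ a * X 4 ^+ n * X 3]mulrA q (tzA H) (tzM H) -!mulrA.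
congr (t ^ _ * _); first lia.
by rewrite exprSr !mulrA.
Qed.

Definition SP {D : unitRingType} (t : D) (X : int -> D) (c : nat) :=
  forall a : nat, Lm t X (Rg a c) (a%:Z * c%:Z - 1)
    (X 3 ^+ a * X 4 ^+ c - t ^ (a%:Z * c%:Z) * Emon t X (- a%:Z - c%:Z, - c%:Z)).

Lemma lemM {D : unitRingType} {t : D} {X} (H : hyp t X) (N : nat)
  (HS : forall n, (n <= N)%N -> SP t X n) (k : nat) :
  forall (a n : nat), (n <= N)%N ->
  Lm t X (Rg a n) (a%:Z * (n%:Z - k%:Z) - 1)
    (X 3 ^+ a * X 4 ^+ n * X 2 ^+ k -
     t ^ (a%:Z * (n%:Z - k%:Z)) * Emon t X (- a%:Z - (pospart (n%:Z - k%:Z))%:Z, k%:Z - n%:Z)).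
Proof.
elim: k => [|k IH] a n hn.
  rewrite expr0 mulr1 subr0 pp_nat sub0r; exact: HS.
case: n hn => [|n] hn.
  rewrite expr0 mulr1 sub0r subr0 subr0.
  rewrite EmonE /Lp /Rp opprK !pp_nat !ppN_nat !expr0 !mulr1 (tzM H).
  rewrite (tzE H (_ : a%:Z * - (k.+1)%:Z - - a%:Z * (k.+1)%:Z = 0)); last lia.
  rewrite mul1r subrr; exact: Lm0.
have e1 : (n.+1)%:Z - (k.+1)%:Z = n%:Z - k%:Z by lia.
have e2 : (k.+1)%:Z - (n.+1)%:Z = k%:Z - n%:Z by lia.
rewrite e1 e2 (stepM H) addrAC; apply: LmD.
  apply: LmW (IH a n (ltnW hn)).
    by move=> w /andP[h1 h2]; apply/andP; split; lia.
  lia.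
have F : Lm t X (Rg a n.+1) ((a.+1)%:Z * (n%:Z - k%:Z)) (X 3 ^+ a.+1 * X 4 ^+ n * X 2 ^+ k).
  apply: diff_full (IH a.+1 n (ltnW hn)) _ _ _ _ => //.
  - by move=> w /andP[h1 h2]; apply/andP; split; lia.
  - rewrite /Rg /=; case: (ppC (n%:Z - k%:Z)) => [[-> ?]|[-> ?]]; apply/andP; split; lia.
  - lia.
apply: LmW (LmT H _ _ _ (-1 - 2 * n%:Z) F) => //; nia.
Qed.

Lemma stepN {D : unitRingType} {t : D} {X} (H : hyp t X) (a c : nat) :
  X 3 ^+ a * X 4 ^+ c.+1 =
  t ^ (-1 - 2 * c%:Z) * (X 3 ^+ a.+1 * X 4 ^+ c * X 0) - t ^ (-4) * (X 3 ^+ a * X 4 ^+ c * X 2 ^+ 3).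
Proof.
have q := qc_pow H (-2) (X 4) (X 3) c 1 (r43 H); rewrite expr1 in q.
have -> : X 3 ^+ a * X 4 ^+ c.+1 =
    X 3 ^+ a * X 4 ^+ c * (t ^ (-1) * (X 3 * X 0) - t ^ (-4) * X 2 ^+ 3).
  by rewrite -(s4 H) exprSr mulrA.
rewrite mulrBr !(tzA H); congr (_ - _).
rewrite [X 3 ^+ a * X 4 ^+ c * (X 3 * X 0)]mulrA -[X 3 ^+ a * X 4 ^+ c * X 3]mulrA q (tzA H).
rewrite -[t ^ _ * (X 3 ^+ a * _) * X 0]mulrA (tzM H).
congr (t ^ _ * _); first lia.
by rewrite exprSr !mulrA.
Qed.

Lemma SPall {D : unitRingType} {t : D} {X} (H : hyp t X) (c : nat) :
  forall n, (n <= c)%N -> SP t X n.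
Proof.
elim: c => [|c IH] n hn.
  have -> : n = 0%N by lia.
  move=> a; rewrite expr0 mulr1 mulr0 expr0z mul1r subr0 oppr0.
  rewrite EmonE /Lp /Rp opprK pp_nat ppN_nat mulr0 oppr0 expr0z !expr0 !mul1r !mulr1 subrr.
  exact: Lm0.
case: (ltnP n c.+1) => hn'; first by apply: IH; lia.
have -> : n = c.+1 by lia.
move=> a; rewrite (stepN H).
have hN := IH c (leqnn c) a.+1.
set Nd := (X 3 ^+ a.+1 * X 4 ^+ c - _) in hN.
have eqN : X 3 ^+ a.+1 * X 4 ^+ c * X 0 =
    Nd * X 0 + t ^ (a%:Z * (c.+1)%:Z + 1 + 2 * c%:Z) * Emon t X (- a%:Z - (c.+1)%:Z, - (c.+1)%:Z).
  rewrite /Nd mulrBl -[t ^ _ * Emon _ _ _ * X 0]mulrA (LX0e H); last lia.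
  rewrite (tzM H).
  rewrite (tzE H (_ : (a.+1)%:Z * c%:Z - (- (a.+1)%:Z - c%:Z) = a%:Z * (c.+1)%:Z + 1 + 2 * c%:Z)); last lia.
  have -> : (- (a.+1)%:Z - c%:Z, - c%:Z - 1) = (- a%:Z - (c.+1)%:Z, - (c.+1)%:Z) by congr pair; lia.
  by rewrite subrK.
rewrite eqN [t ^ _ * (_ + _)]mulrDr (tzM H).
rewrite (tzE H (_ : -1 - 2 * c%:Z + (a%:Z * (c.+1)%:Z + 1 + 2 * c%:Z) = a%:Z * (c.+1)%:Z)); last lia.
rewrite addrAC addrK; apply: LmB.
  apply: LmW (LmT H _ _ _ (-1 - 2 * c%:Z) (@Lm_bind _ t X _ (Rg a c.+1) _ (a%:Z * c%:Z + a%:Z + 2 * c%:Z) _ _ hN _)) => //.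
    nia.
  move=> [v1 v2] e hv he; rewrite -mulrA; apply: LmW (LmT H _ _ _ e (LX0F H v1 v2)).
    by move: hv => /andP[/= h1 h2] w /andP[h3 h4]; apply/andP; split; lia.
  move: hv => /andP[/= h1 h2]; nia.
have F : Lm t X (Rg a c.+1) (a%:Z * (c%:Z - 3%:Z)) (X 3 ^+ a * X 4 ^+ c * X 2 ^+ 3).
  have L := lemM H c IH 3 a c (leqnn c).
  apply: (diff_full _ _ _ _ _ _ _ L) => //.
  - by move=> w /andP[h1 h2]; apply/andP; split; lia.
  - rewrite /Rg /=; case: (ppC (c%:Z - 3%:Z)) => [[-> ?]|[-> ?]]; apply/andP; split; lia.
  - lia.
apply: LmW (LmT H _ _ _ (-4) F) => //; nia.
Qed.


Definition Rg' (r c : int) : pred (int * int) := fun w => (r - c <= w.1) && (- c < w.2).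

Lemma SMall {D : unitRingType} {t : D} {X} (H : hyp t X) (c : nat) (r : nat) :
  Lm t X (Rg' r c) (r%:Z * c%:Z - 1)
    (X 4 ^+ c * X 1 ^+ r - t ^ (r%:Z * c%:Z) * Emon t X (r%:Z - c%:Z, - c%:Z)).
Proof.
elim: r => [|r IH].
  have := SPall H c c (leqnn c) 0%N.
  rewrite !expr0 mul1r mulr1 oppr0 sub0r; apply: LmW => //.
have -> : X 4 ^+ c * X 1 ^+ r.+1 - t ^ ((r.+1)%:Z * c%:Z) * Emon t X ((r.+1)%:Z - c%:Z, - c%:Z) =
   (X 4 ^+ c * X 1 ^+ r - t ^ (r%:Z * c%:Z) * Emon t X (r%:Z - c%:Z, - c%:Z)) * X 1 +
   t ^ (r%:Z * c%:Z) * (Emon t X (r%:Z - c%:Z, - c%:Z) * X 1 -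
      t ^ (- - c%:Z) * Emon t X (r%:Z - c%:Z + 1, - c%:Z)).
  rewrite mulrBl mulrBr -mulrA (tzM H) exprSr mulrA addrA -[t ^ _ * Emon _ _ _ * X 1]mulrA subrK.
  have -> : (r.+1)%:Z - c%:Z = r%:Z - c%:Z + 1 by lia.
  by rewrite (tzE H (_ : r%:Z * c%:Z - - c%:Z = (r.+1)%:Z * c%:Z)) //; lia.
apply: LmD.
  apply: (Lm_bind _ _ _ _ _ _ _ _ IH) => -[v1 v2] e hv he; rewrite -mulrA.
  apply: LmW (LmT H _ _ _ e (LX1F H v1 v2)).
    by move: hv => /andP[/= h1 h2] w /andP[h3 h4]; apply/andP; split; lia.
  move: hv => /andP[/= h1 h2]; nia.
apply: LmW (LmT H _ _ _ (r%:Z * c%:Z) (LX1 H (r%:Z - c%:Z) (- c%:Z))).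
  by move=> w /andP[h3 h4]; apply/andP; split; lia.
nia.
Qed.

Lemma Lm_final {D : unitRingType} (t : D) X P x : Lm t X P (-1) x ->
  exists s : seq ((int * int) * nat * int),
    x = \sum_(w <- s) ((w.2)%:~R * t ^- (w.1.2).+1 * Emon t X w.1.1).
Proof.
move=> [s [h ->]]; elim: s h => [|[[v e] m] s IH] /=.
  by move=> _; exists [::]; rewrite !big_nil.
move=> /andP[/andP[_ hw] hs]; have [s' e'] := IH hs.
case: e hw => n hw; first by exfalso; lia.
exists (((v, n), m) :: s'); rewrite !big_cons e' /=; congr (_ + _).
by rewrite -mulrA mulrzl.
Qed.


Lemma case_pp {D : unitRingType} {t : D} {X} (H : hyp t X) (m k : nat) :
  mu1E t X (m%:Z, k%:Z) = Emon t X (psi (m%:Z, k%:Z)).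
Proof.
rewrite /mu1E /Emon /psi /= !ppN_nat subr0 opprK !pp_nat !expr0 !mulr1.
rewrite ppN_nat expr0 mulr1.
have q := qc_pow H 2 (X 2) (X 3) k m (r23 H).
rewrite -mulrA q (tzM H) -[t ^ _ * X 3 ^+ m * X 2 ^+ k]mulrA; congr (t ^ _ * _); nia.
Qed.

Lemma case_np {D : unitRingType} {t : D} {X} (H : hyp t X) (m k : nat) :
  mu1E t X (- (m.+1)%:Z, k%:Z) = Emon t X (psi (- (m.+1)%:Z, k%:Z)).
Proof.
rewrite /mu1E /Emon /psi /= !ppN_nat subr0 opprK !pp_nat !expr0 !mulr1.
have q := qc_pow H (-2) (X 2) (X 1) k m.+1 (r21 H).
rewrite -mulrA q (tzM H) -[t ^ _ * X 1 ^+ m.+1 * X 2 ^+ k]mulrA; congr (t ^ _ * _); nia.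
Qed.

Lemma case_pn {D : unitRingType} {t : D} {X} (H : hyp t X) (m c : nat) :
  Lm t X (Rg m c) (-1) (mu1E t X (m%:Z, - c%:Z) - Emon t X (psi (m%:Z, - c%:Z))).
Proof.
have S := SPall H c c (leqnn c) m.
have q := qc_pow H (-2) (X 4) (X 3) c m (r43 H).
have -> : psi (m%:Z, - c%:Z) = (- m%:Z - c%:Z, - c%:Z) by rewrite /psi /= opprK pp_nat.
have -> : mu1E t X (m%:Z, - c%:Z) = t ^ (- (m%:Z * c%:Z)) * (X 3 ^+ m * X 4 ^+ c).
  rewrite /mu1E opprK !pp_nat !ppN_nat !expr0 !mulr1 -mulrA q (tzM H).
  congr (t ^ _ * _); nia.
have -> : t ^ (- (m%:Z * c%:Z)) * (X 3 ^+ m * X 4 ^+ c) - Emon t X (- m%:Z - c%:Z, - c%:Z) =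
   t ^ (- (m%:Z * c%:Z)) * (X 3 ^+ m * X 4 ^+ c - t ^ (m%:Z * c%:Z) * Emon t X (- m%:Z - c%:Z, - c%:Z)).
  by rewrite mulrBr (tzM H) addNr mul1r.
apply: LmW (LmT H _ _ _ _ S) => //; lia.
Qed.

Lemma case_nn {D : unitRingType} {t : D} {X} (H : hyp t X) (r c : nat) :
  Lm t X (Rg' r c) (-1) (mu1E t X (- r%:Z, - c%:Z) - Emon t X (psi (- r%:Z, - c%:Z))).
Proof.
have S := SMall H c r.
have -> : psi (- r%:Z, - c%:Z) = (r%:Z - c%:Z, - c%:Z) by rewrite /psi /= !opprK pp_nat.
have -> : mu1E t X (- r%:Z, - c%:Z) = t ^ (- (r%:Z * c%:Z)) * (X 4 ^+ c * X 1 ^+ r).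
  rewrite /mu1E !opprK !pp_nat !ppN_nat !expr0 !mulr1 -mulrA.
  congr (t ^ _ * _); nia.
have -> : t ^ (- (r%:Z * c%:Z)) * (X 4 ^+ c * X 1 ^+ r) - Emon t X (r%:Z - c%:Z, - c%:Z) =
   t ^ (- (r%:Z * c%:Z)) * (X 4 ^+ c * X 1 ^+ r - t ^ (r%:Z * c%:Z) * Emon t X (r%:Z - c%:Z, - c%:Z)).
  by rewrite mulrBr (tzM H) addNr mul1r.
apply: LmW (LmT H _ _ _ _ S) => //; lia.
Qed.


Theorem lemma4p8 (D : unitRingType) (t : D) (X : int -> D) :
  (* D is a division ring (skew field) *)
  (forall x : D, x != 0 -> x \is a GRing.unit) ->
  (* t = q^{1/2} is central and invertible *)
  t \is a GRing.unit -> (forall x : D, t * x = x * t) ->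
  (* X_1, X_2 invertible with X_1 X_2 = q X_2 X_1, generating a faithful
     copy of the quantum torus *)
  X 1 \is a GRing.unit -> X 2 \is a GRing.unit ->
  X 1 * X 2 = t ^+ 2 * (X 2 * X 1) ->
  torus_faithful t (X 1) (X 2) ->
  (* exchange relations defining all X_k *)
  (forall k : int, X (k - 1) * X (k + 1) = exch t k (X k)) ->
  forall a b : int,
    exists s : seq ((int * int) * nat * int),
      mu1E t X (a, b) - Emon t X (psi (a, b))
      = \sum_(w <- s) ((w.2)%:~R * t ^- (w.1.2).+1 * Emon t X w.1.1).
Proof.
move=> _ tU tC X1U X2U c12 _ hX a b.
have H : hyp t X := @Hyp D t X tU tC X1U X2U c12 (hX 1) (hX 2) (hX 3).
case: b => [k|n].
  case: a => [m|m].
    by exists [::]; rewrite big_nil (case_pp H) subrr.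
  by exists [::]; rewrite big_nil NegzE (case_np H) subrr.
rewrite NegzE; case: a => [m|m].
  exact: Lm_final (case_pn H m n.+1).
rewrite NegzE; exact: Lm_final (case_nn H m.+1 n.+1).
Qed.
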